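(* Let $0<\kappa<1$, $\lambda=\sqrt{1-\kappa^2}$, and let $k\in(0,1)$ be defined by $k^2=\frac{1-\lambda}{1+\lambda}$. For $\phi$ near $0$ define $$u(\phi)=\int_0^{\phi} F\!\left(\tfrac14,\tfrac34;\tfrac12;\kappa^2\sin^2\theta\right)\,\mathrm{d}\theta ,$$ let $u\mapsto\phi(u)$ be the local inverse near $0$ with $\phi(0)=0$, and set $c(u)=\cos\phi(u)$. Let $\mathrm{cn},\mathrm{dn}$ be the Jacobian elliptic functions of modulus $k$. Then $$c^2(u)=\mathrm{cn}^2\!\left[(1+k^2)^{-1/2}u\right]\,\mathrm{dn}^2\!\left[(1+k^2)^{-1/2}u\right].$$
   Context: $F(a,b;c;z)$ denotes the Gauss hypergeometric function ${}_2F_1(a,b;c;z)$. $\mathrm{sn},\mathrm{cn},\mathrm{dn}$ are the standard Jacobian elliptic functions of modulus $k$. The identity holds near $u=0$ (and hence for the meromorphic extension of $c^2$). *)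

(* Defs.v *)
From Stdlib Require Import Reals ClassicalEpsilon.
From Coquelicot Require Import Coquelicot.
Open Scope R_scope.

Fixpoint poch (a : R) (n : nat) : R :=
  match n with
  | O => 1
  | S m => poch a m * (a + INR m)
  end.

Definition hyp2F1 (a b c z : R) : R :=
  Series (fun n => poch a n * poch b n / (poch c n * INR (Factorial.fact n)) * z ^ n).

Definition ellF (k phi : R) : R :=
  RInt (fun t => / sqrt (1 - k ^ 2 * sin t ^ 2)) 0 phi.

(* Jacobi amplitude: the (for 0 <= k < 1 unique) phi with ellF k phi = u. *)
Definition jam (k u : R) : R :=
  epsilon (inhabits 0) (fun phi => ellF k phi = u).

Definition jsn (k u : R) : R := sin (jam k u).
Definition jcn (k u : R) : R := cos (jam k u).
Definition jdn (k u : R) : R := sqrt (1 - k ^ 2 * jsn k u ^ 2).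

(* Main.v *)
Require Import Defs.
From Stdlib Require Import Reals Lra Lia Psatz ClassicalEpsilon.
From Coquelicot Require Import Coquelicot.
Open Scope R_scope.

Definition acoef (m : nat) : R := poch (1/2) m / INR (Factorial.fact m).

Lemma poch_pos a n : 0 < a -> 0 < poch a n.
Proof.
  intros Ha; induction n as [|n IH]; simpl; [lra|].
  apply Rmult_lt_0_compat; [lra|]. pose proof (pos_INR n); lra.
Qed.

Lemma fact_pos n : 0 < INR (Factorial.fact n).
Proof. apply lt_0_INR. apply Factorial.lt_O_fact. Qed.

Lemma acoef_S m : acoef (S m) = acoef m * ((1/2 + INR m) / (INR m + 1)).
Proof.
  unfold acoef. simpl poch. change (Factorial.fact (S m)) with (S m * Factorial.fact m)%nat.
  rewrite mult_INR, S_INR. pose proof (fact_pos m). pose proof (pos_INR m).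
  field. lra.
Qed.

Lemma acoef_bound m : 0 <= acoef m <= 1.
Proof.
  induction m as [|m IH].
  - unfold acoef; simpl; lra.
  - rewrite acoef_S. pose proof (pos_INR m).
    assert (0 <= (1/2 + INR m) / (INR m + 1) <= 1).
    { split. apply Rmult_le_pos; [lra|]. left; apply Rinv_0_lt_compat; lra.
      apply Rmult_le_reg_r with (INR m + 1); [lra|].
      unfold Rdiv; rewrite Rmult_assoc, Rinv_l by lra. lra. }
    split; [apply Rmult_le_pos; lra|]. nra.
Qed.

Lemma poch_S a n : poch a (S n) = poch a n * (a + INR n).
Proof. reflexivity. Qed.

Lemma coef_id n :
  poch (1/4) n * poch (3/4) n / (poch (1/2) n * INR (Factorial.fact n)) = acoef (2*n).
Proof.
  assert (Key : poch (1/4) n * poch (3/4) n * INR (Factorial.fact (2*n))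
              = poch (1/2) (2*n) * (poch (1/2) n * INR (Factorial.fact n))).
  { induction n as [|n IH]. simpl; lra.
    replace (2 * S n)%nat with (S (S (2*n))) by lia.
    assert (Hm : INR (2*n) = 2 * INR n) by (rewrite mult_INR; simpl; ring).
    revert IH Hm. generalize (2*n)%nat. intros m IH Hm.
    rewrite !poch_S.
    change (Factorial.fact (S (S m))) with (S (S m) * (S m * Factorial.fact m))%nat.
    change (Factorial.fact (S n)) with (S n * Factorial.fact n)%nat.
    rewrite !mult_INR, !S_INR, Hm.
    transitivity (poch (1 / 4) n * poch (3 / 4) n * INR (Factorial.fact m) *
      ((1/4 + INR n) * (3/4 + INR n) * (2 * INR n + 1 + 1) * (2 * INR n + 1))).
    { ring. }
    rewrite IH. field. }
  unfold acoef. pose proof (fact_pos n). pose proof (fact_pos (2*n)).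
  pose proof (poch_pos (1/2) n ltac:(lra)).
  transitivity ((poch (1/4) n * poch (3/4) n * INR (Factorial.fact (2*n))) /
     (poch (1/2) n * INR (Factorial.fact n) * INR (Factorial.fact (2*n)))).
  { field. split; lra. }
  rewrite Key. field. split; lra.
Qed.


Lemma CV_ge1 (b : nat -> R) : (forall n, 0 <= b n <= 1) -> Rbar_le 1 (CV_radius b).
Proof.
  intros Hb. destruct (CV_radius_bounded b) as [Hub _]. apply Hub.
  exists 1. intros n. rewrite pow1, Rmult_1_r, Rabs_pos_eq; apply Hb.
Qed.

Lemma rad_lt b x : (forall n, 0 <= b n <= 1) -> Rabs x < 1 -> Rbar_lt (Rabs x) (CV_radius b).
Proof.
  intros Hb Hx. pose proof (CV_ge1 b Hb) as H.
  destruct (CV_radius b) as [r| |]; simpl in *; auto. lra.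
Qed.

Lemma acoef_deriv_id m : INR m * acoef m + 1/2 * acoef m = INR (S m) * acoef (S m).
Proof. rewrite acoef_S, S_INR. pose proof (pos_INR m). field. lra. Qed.

Lemma binom_ode y : -1 < y < 1 ->
  PSeries (PS_derive acoef) y = y * PSeries (PS_derive acoef) y + 1/2 * PSeries acoef y.
Proof.
  intros Hy.
  assert (Hr : Rbar_lt (Rabs y) (CV_radius acoef)).
  { apply rad_lt. apply acoef_bound. apply Rabs_def1; lra. }
  pose proof (PSeries_correct _ _ (ex_pseries_derive _ _ Hr)) as HD0.
  pose proof (PSeries_correct _ _ (CV_radius_inside _ _ Hr)) as Hf.
  pose proof (is_pseries_incr_1 _ _ _ HD0) as H1.
  pose proof (is_pseries_scal (1/2) _ _ _ (Rmult_comm _ _) Hf) as H2.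
  pose proof (is_pseries_plus _ _ _ _ _ H1 H2) as H3.
  apply is_pseries_unique. revert H3. apply is_pseries_ext.
  intros n. unfold PS_plus, PS_incr_1, PS_scal, PS_derive. 
  destruct n as [|n].
  - rewrite <- (acoef_deriv_id 0). simpl. unfold plus, scal, zero; simpl. unfold mult; simpl. ring.
  - rewrite <- (acoef_deriv_id (S n)). unfold plus, scal; simpl. unfold mult; simpl. ring.
Qed.

Lemma binom x : -1 < x < 1 -> PSeries acoef x = / sqrt (1 - x).
Proof.
  intros Hx.
  set (h := fun y => PSeries acoef y * sqrt (1 - y)).
  assert (Hd : forall y, -1 < y < 1 -> is_derive h y 0).
  { intros y Hy.
    assert (Hr : Rbar_lt (Rabs y) (CV_radius acoef)).
    { apply rad_lt. apply acoef_bound. apply Rabs_def1; lra. }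
    assert (Hs : is_derive (fun t => sqrt (1 - t)) y (-1 / (2 * sqrt (1 - y)))).
    { auto_derive. lra. unfold Rminus. field. apply Rgt_not_eq, sqrt_lt_R0. lra. }
    pose proof (is_derive_mult _ _ _ _ _ (is_derive_PSeries _ _ Hr) Hs (fun a b => Rmult_comm a b)) as H.
    unfold h. match type of H with is_derive _ _ ?v => replace 0 with v; [exact H|] end.
    pose proof (binom_ode y Hy) as HO.
    unfold plus, mult; simpl.
    assert (0 < sqrt (1 - y)) by (apply sqrt_lt_R0; lra).
    assert (sqrt (1 - y) * sqrt (1 - y) = 1 - y) by (apply sqrt_sqrt; lra).
    apply Rmult_eq_reg_r with (2 * sqrt (1 - y)); [|lra].
    field_simplify; [|lra]. nra. }
  assert (H0 : h 0 = 1).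
  { unfold h. rewrite PSeries_0, Rminus_0_r, sqrt_1. unfold acoef; simpl; lra. }
  assert (Hx' : h x = 1).
  { destruct (Rtotal_order x 0) as [Hl|[He|Hg]].
    - rewrite <- H0. apply eq_is_derive; [|lra]. intros t Ht. apply Hd. lra.
    - subst; exact H0.
    - rewrite <- H0. symmetry. apply eq_is_derive; [|lra]. intros t Ht. apply Hd. lra. }
  unfold h in Hx'.
  assert (0 < sqrt (1 - x)) by (apply sqrt_lt_R0; lra).
  apply Rmult_eq_reg_r with (sqrt (1 - x)); [|lra]. rewrite Hx'. field. lra.
Qed.


Lemma hyp_closed x : -1 < x < 1 ->
  hyp2F1 (1/4) (3/4) (1/2) (x^2) = (/ sqrt (1 - x) + / sqrt (1 + x)) / 2.
Proof.
  intros Hx. unfold hyp2F1.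
  rewrite (Series_ext _ (fun n => acoef (2*n) * (x^2)^n)) by (intro; rewrite coef_id; auto).
  change (Series (fun n => acoef (2*n) * (x^2)^n)) with (PSeries (fun n => acoef (2*n)) (x^2)).
  assert (Hx2 : Rabs (x^2) < 1).
  { rewrite Rabs_pos_eq by nra. nra. }
  assert (Hev : ex_pseries (fun n => acoef (2*n)) (x^2)).
  { apply CV_radius_inside, rad_lt; auto. intro; apply acoef_bound. }
  assert (Hod : ex_pseries (fun n => acoef (2*n+1)) (x^2)).
  { apply CV_radius_inside, rad_lt; auto. intro; apply acoef_bound. }
  pose proof (PSeries_odd_even acoef x Hev Hod) as H1.
  pose proof (PSeries_odd_even acoef (-x)) as H2.
  replace ((-x)^2) with (x^2) in H2 by ring. specialize (H2 Hev Hod).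
  rewrite binom in H1 by lra. rewrite binom in H2 by lra.
  replace (1 - - x) with (1 + x) in H2 by ring.
  lra.
Qed.


Section Gen.
Variable f : R -> R.
Hypothesis fc : forall x, continuous f x.
Hypothesis f1 : forall x, 1 <= f x.

Lemma exR a b : ex_RInt f a b.
Proof. apply (@ex_RInt_continuous R_CompleteNormedModule). intros; apply fc. Qed.

Lemma Fmono a b : a <= b -> b - a <= RInt f 0 b - RInt f 0 a.
Proof.
  intros Hab. rewrite <- (RInt_Chasles f 0 a b) by apply exR.
  change (plus (RInt f 0 a) (RInt f a b)) with (RInt f 0 a + RInt f a b).
  assert (b - a <= RInt f a b).
  { replace (b - a) with (RInt (fun _ => 1) a b).
    apply RInt_le; auto. apply ex_RInt_const. apply exR.
    rewrite RInt_const. unfold scal; simpl; unfold mult; simpl. ring. }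
  lra.
Qed.

Lemma F0 : RInt f 0 0 = 0.
Proof. exact (RInt_point (V:=R_CompleteNormedModule) 0 f). Qed.

Lemma Fcont : continuity (fun p => RInt f 0 p).
Proof.
  intros x. apply continuity_pt_filterlim.
  apply (ex_derive_continuous (fun p => RInt f 0 p)).
  exists (f x). apply is_derive_RInt with 0.
  apply filter_forall. intros; apply RInt_correct, exR. apply fc.
Qed.

Lemma Finj a b : RInt f 0 a = RInt f 0 b -> a = b.
Proof.
  intros H. destruct (Rtotal_order a b) as [Hl|[He|Hg]]; auto.
  - pose proof (Fmono a b (Rlt_le _ _ Hl)). lra.
  - pose proof (Fmono b a (Rlt_le _ _ Hg)). lra.
Qed.

Lemma Fbound p : Rabs p <= Rabs (RInt f 0 p).
Proof.
  destruct (Rle_lt_dec 0 p) as [Hp|Hp].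
  - pose proof (Fmono 0 p Hp). rewrite F0 in H.
    rewrite !Rabs_pos_eq; lra.
  - pose proof (Fmono p 0 (Rlt_le _ _ Hp)). rewrite F0 in H.
    rewrite Rabs_left by lra. rewrite Rabs_left by lra. lra.
Qed.

Lemma Fsurj v : exists p, RInt f 0 p = v.
Proof.
  set (w := Rabs v).
  pose proof (Fmono 0 w (Rabs_pos v)) as H1.
  pose proof (Fmono (-w) 0 ltac:(pose proof (Rabs_pos v); unfold w; lra)) as H2.
  rewrite F0 in H1, H2.
  assert (-w <= v <= w) by (unfold w; split; [pose proof (Rle_abs (-v)); rewrite Rabs_Ropp in H; lra | apply Rle_abs]).
  destruct (IVT_gen (fun p => RInt f 0 p) (-w) w v Fcont) as [p [_ Hp]].
  { split.
    - apply Rle_trans with (RInt f 0 (-w)); [apply Rmin_l | lra].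
    - apply Rle_trans with (RInt f 0 w); [lra | apply Rmax_r]. }
  exists p; exact Hp.
Qed.
End Gen.


Definition Gk (kap th : R) : R := (/ sqrt (1 - kap * sin th) + / sqrt (1 + kap * sin th)) / 2.

Lemma sin_bd x : -1 <= sin x <= 1.
Proof. split; [apply SIN_bound | apply SIN_bound]. Qed.

Lemma hyp_G kap th : 0 < kap < 1 ->
  hyp2F1 (1/4) (3/4) (1/2) (kap ^ 2 * sin th ^ 2) = Gk kap th.
Proof.
  intros Hk. pose proof (sin_bd th).
  replace (kap ^ 2 * sin th ^ 2) with ((kap * sin th) ^ 2) by ring.
  rewrite hyp_closed. unfold Gk. lra.
  split; nra.
Qed.

Lemma G_ge1 kap th : 0 < kap < 1 -> 1 <= Gk kap th.
Proof.
  intros Hk. pose proof (sin_bd th). unfold Gk.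
  set (t := kap * sin th).
  assert (-1 < t < 1) by (unfold t; split; nra).
  set (p := sqrt (1 + t)). set (q := sqrt (1 - t)).
  assert (0 < p) by (apply sqrt_lt_R0; lra).
  assert (0 < q) by (apply sqrt_lt_R0; lra).
  assert (Hp2 : p * p = 1 + t) by (apply sqrt_sqrt; lra).
  assert (Hq2 : q * q = 1 - t) by (apply sqrt_sqrt; lra).
  assert ((p * q) * (p * q) <= 1) by (replace ((p*q)*(p*q)) with ((p*p)*(q*q)) by ring; rewrite Hp2, Hq2; nra).
  assert (p * q <= 1) by nra.
  assert (2 * (p * q) <= p + q) by nra.
  apply Rmult_le_reg_r with (2 * p * q). nra.
  field_simplify; try lra.
Qed.

Lemma G_cont kap th : 0 < kap < 1 -> continuous (Gk kap) th.
Proof.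
  intros Hk. apply (ex_derive_continuous (Gk kap)). pose proof (sin_bd th). unfold Gk.
  auto_derive. repeat split; try (apply Rgt_not_eq, sqrt_lt_R0); nra.
Qed.

Definition Ek (k t : R) : R := / sqrt (1 - k ^ 2 * sin t ^ 2).

Lemma E_ge1 k t : 0 < k < 1 -> 1 <= Ek k t.
Proof.
  intros Hk. pose proof (sin_bd t). unfold Ek.
  assert (0 <= sin t ^ 2 <= 1) by (split; nra).
  assert (0 < k ^ 2 < 1) by (split; nra).
  assert (0 < 1 - k^2 * sin t ^2 <= 1) by (split; nra).
  assert (0 < sqrt (1 - k ^ 2 * sin t ^ 2)) by (apply sqrt_lt_R0; lra).
  assert (sqrt (1 - k ^ 2 * sin t ^ 2) <= 1).
  { apply Rle_trans with (sqrt 1); [apply sqrt_le_1_alt; lra | rewrite sqrt_1; lra]. }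
  apply Rmult_le_reg_r with (sqrt (1 - k ^ 2 * sin t ^ 2)); auto.
  rewrite Rinv_l by lra. lra.
Qed.

Lemma E_cont k t : 0 < k < 1 -> continuous (Ek k) t.
Proof.
  intros Hk. apply (ex_derive_continuous (Ek k)). pose proof (sin_bd t). unfold Ek.
  assert (0 <= sin t ^ 2 <= 1) by (split; nra).
  assert (0 < k ^ 2 < 1) by (split; nra).
  auto_derive. repeat split; try (apply Rgt_not_eq, sqrt_lt_R0); nra.
Qed.


Definition Af (k y : R) := sqrt (1 + k^2 - k^2 * sin y ^ 2).
Definition Qf (k y : R) := sin y * Af k y.
Definition Pf (k y : R) := asin (Qf k y).
Definition dQf (k y : R) := cos y * (1 + k^2 - 2 * k^2 * sin y ^ 2) / Af k y.
Definition dPf (k y : R) := dQf k y / sqrt (1 - Qf k y ^ 2).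

Section K.
Variable k : R.
Hypothesis Hk : 0 < k < 1.

Lemma A_facts y : 0 < Af k y /\ Af k y * Af k y = 1 + k^2 - k^2 * sin y ^ 2
   /\ 1 <= 1 + k^2 - k^2 * sin y ^ 2.
Proof.
  pose proof (sin_bd y).
  assert (0 <= sin y ^ 2 <= 1) by (split; nra).
  assert (0 < k ^ 2 < 1) by (split; nra).
  assert (1 <= 1 + k^2 - k^2 * sin y ^ 2) by nra.
  unfold Af; split; [apply sqrt_lt_R0; lra | split; [apply sqrt_sqrt; lra | lra]].
Qed.

Lemma cos_pos y : -1 < y < 1 -> 0 < cos y.
Proof. intros. pose proof PI2_1. apply cos_gt_0; lra. Qed.

Lemma oneQ y : 1 - Qf k y ^ 2 = cos y ^ 2 * (1 - k^2 * sin y ^ 2).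
Proof.
  destruct (A_facts y) as [_ [HA _]]. unfold Qf.
  pose proof (sin2_cos2 y). unfold Rsqr in H.
  replace ((sin y * Af k y) ^ 2) with (sin y ^ 2 * (Af k y * Af k y)) by ring.
  rewrite HA. replace (cos y ^ 2) with (1 - sin y ^ 2) by nra. ring.
Qed.

Lemma B_facts y : 0 < 1 - k^2 * sin y ^ 2 <= 1.
Proof.
  pose proof (sin_bd y).
  assert (0 <= sin y ^ 2 <= 1) by (split; nra).
  assert (0 < k ^ 2 < 1) by (split; nra).
  split; nra.
Qed.

Lemma Q_lt y : -1 < y < 1 -> 0 < 1 - Qf k y ^ 2.
Proof.
  intros Hy. rewrite oneQ. pose proof (cos_pos y Hy). pose proof (B_facts y).
  apply Rmult_lt_0_compat; [nra|lra].
Qed.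

Lemma Q_der y : is_derive (Qf k) y (dQf k y).
Proof.
  destruct (A_facts y) as [HA0 [HA HA1]].
  unfold Qf, dQf, Af in *. auto_derive. lra.
  replace (1 + k * (k * 1) + - (k * (k * 1) * (sin y * (sin y * 1))))
    with (1 + k ^ 2 - k ^ 2 * sin y ^ 2) by ring.
  set (a := sqrt (1 + k ^ 2 - k ^ 2 * sin y ^ 2)) in *.
  replace (1 + k ^ 2 - 2 * k ^ 2 * sin y ^ 2) with (a * a - k^2 * sin y ^ 2) by (rewrite HA; ring).
  field. lra.
Qed.

Lemma P_der y : -1 < y < 1 -> is_derive (Pf k) y (dPf k y).
Proof.
  intros Hy. pose proof (Q_lt y Hy) as HQ.
  assert (HQ1 : -1 < Qf k y < 1) by (split; nra).
  assert (Has : is_derive asin (Qf k y) (/ sqrt (1 - Qf k y ^ 2))).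
  { apply is_derive_Reals.
    apply derive_pt_eq_1 with (derivable_pt_asin _ HQ1).
    rewrite derive_pt_asin. unfold Rsqr. replace (Qf k y ^ 2) with (Qf k y * Qf k y) by ring.
    field. apply Rgt_not_eq, sqrt_lt_R0. nra. }
  pose proof (is_derive_comp asin (Qf k) y _ _ Has (Q_der y)) as H.
  unfold Pf, dPf. exact H.
Qed.

Lemma dP_cont y : -1 < y < 1 -> continuous (dPf k) y.
Proof.
  intros Hy. apply (ex_derive_continuous (dPf k)).
  pose proof (Q_lt y Hy) as HQ. destruct (A_facts y) as [HA0 [HA HA1]].
  unfold dPf, dQf, Qf, Af in *. auto_derive.
  repeat split; try (apply Rgt_not_eq, sqrt_lt_R0); try lra.
  all: replace (1 + k * (k * 1) + - (k * (k * 1) * (sin y * (sin y * 1))))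
    with (1 + k ^ 2 - k ^ 2 * sin y ^ 2) by ring.
  all: match goal with |- 0 < ?e => replace e with (1 - (sin y * sqrt (1 + k ^ 2 - k ^ 2 * sin y ^ 2)) ^ 2) by ring; exact HQ end.
Qed.

Lemma sinP y : -1 < y < 1 -> sin (Pf k y) = Qf k y.
Proof.
  intros Hy. pose proof (Q_lt y Hy). unfold Pf. apply sin_asin. split; nra.
Qed.

Lemma P0 : Pf k 0 = 0.
Proof. unfold Pf, Qf. rewrite sin_0, Rmult_0_l. apply asin_0. Qed.

Lemma cosP y : -1 < y < 1 -> cos (Pf k y) ^ 2 = cos y ^ 2 * (1 - k ^ 2 * sin y ^ 2).
Proof.
  intros Hy. rewrite <- oneQ, <- sinP by auto.
  pose proof (sin2_cos2 (Pf k y)). unfold Rsqr in H. nra.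
Qed.

Variable kap : R.
Hypothesis Hkap : kap * (1 + k ^ 2) = 2 * k.

Lemma key y : -1 < y < 1 -> dPf k y * Gk kap (Pf k y) = sqrt (1 + k ^ 2) * Ek k y.
Proof.
  intros Hy. unfold Gk. rewrite sinP by auto. unfold dPf, dQf, Ek.
  rewrite oneQ. unfold Qf.
  pose proof (cos_pos y Hy) as Hc. pose proof (B_facts y) as HB.
  destruct (A_facts y) as [HA0 [HA HA1]].
  pose proof (sin_bd y) as Hs.
  set (s := sin y) in *. set (c := cos y) in *. set (A := Af k y) in *.
  set (B := sqrt (1 - k ^ 2 * s ^ 2)).
  assert (HB0 : 0 < B) by (apply sqrt_lt_R0; lra).
  assert (HB2 : B * B = 1 - k ^ 2 * s ^ 2) by (apply sqrt_sqrt; lra).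
  set (r := sqrt (1 + k ^ 2)).
  assert (Hr0 : 0 < r) by (apply sqrt_lt_R0; nra).
  assert (Hr2 : r * r = 1 + k ^ 2) by (apply sqrt_sqrt; nra).
  assert (Hcb : sqrt (c ^ 2 * (1 - k ^ 2 * s ^ 2)) = c * B).
  { replace (c ^ 2 * (1 - k ^ 2 * s ^ 2)) with ((c * B) ^ 2) by (rewrite <- HB2; ring).
    apply sqrt_pow2. nra. }
  rewrite Hcb.
  assert (Hk2 : 0 < k ^ 2 < 1) by (split; nra).
  assert (Hs2 : s ^ 2 <= 1) by nra.
  assert (Hprod : (A - k * s) * (A + k * s) = 1 + k^2 - 2 * k ^ 2 * s ^ 2).
  { replace ((A - k * s) * (A + k * s)) with (A * A - k^2 * s^2) by ring. rewrite HA. ring. }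
  assert (Hpos : 0 < 1 + k^2 - 2 * k ^ 2 * s ^ 2) by nra.
  assert (Hm : 0 < A - k * s /\ 0 < A + k * s).
  { destruct (Rle_lt_dec (A - k * s) 0); destruct (Rle_lt_dec (A + k * s) 0); try nra. }
  destruct Hm as [Hm1 Hm2].
  assert (Hkk : kap * (s * A) * (1 + k^2) = 2 * k * s * A).
  { replace (kap * (s * A) * (1 + k^2)) with ((kap * (1 + k^2)) * (s * A)) by ring.
    rewrite Hkap. ring. }
  assert (Hs1 : sqrt (1 - kap * (s * A)) = (A - k * s) / r).
  { replace (1 - kap * (s * A)) with (((A - k * s) / r) ^ 2).
    apply sqrt_pow2. apply Rmult_le_pos; [lra | left; apply Rinv_0_lt_compat; lra].
    apply Rmult_eq_reg_r with (1 + k^2); [|nra].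
    replace (((A - k * s) / r) ^ 2 * (1 + k ^ 2)) with ((A - k * s) ^ 2) by (rewrite <- Hr2; field; lra).
    replace ((1 - kap * (s * A)) * (1 + k ^ 2)) with ((1 + k^2) - kap * (s * A) * (1 + k ^ 2)) by ring.
    rewrite Hkk. replace ((A - k * s) ^ 2) with (A * A - 2 * k * s * A + k^2 * s^2) by ring.
    rewrite HA. ring. }
  assert (Hs2' : sqrt (1 + kap * (s * A)) = (A + k * s) / r).
  { replace (1 + kap * (s * A)) with (((A + k * s) / r) ^ 2).
    apply sqrt_pow2. apply Rmult_le_pos; [lra | left; apply Rinv_0_lt_compat; lra].
    apply Rmult_eq_reg_r with (1 + k^2); [|nra].
    replace (((A + k * s) / r) ^ 2 * (1 + k ^ 2)) with ((A + k * s) ^ 2) by (rewrite <- Hr2; field; lra).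
    replace ((1 + kap * (s * A)) * (1 + k ^ 2)) with ((1 + k^2) + kap * (s * A) * (1 + k ^ 2)) by ring.
    rewrite Hkk. replace ((A + k * s) ^ 2) with (A * A + 2 * k * s * A + k^2 * s^2) by ring.
    rewrite HA. ring. }
  rewrite Hs1, Hs2'. fold B.
  rewrite <- Hprod. field. repeat split; lra.
Qed.
End K.


Lemma minmax_abs p x : Rmin 0 p <= x <= Rmax 0 p -> Rabs x <= Rabs p.
Proof.
  intros H. unfold Rmin, Rmax in H. destruct (Rle_dec 0 p).
  - rewrite (Rabs_pos_eq p) by lra. rewrite Rabs_pos_eq by lra. lra.
  - rewrite (Rabs_left p) by lra. destruct (Rle_dec 0 x).
    + rewrite Rabs_pos_eq by lra. lra.
    + rewrite Rabs_left by lra. lra.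
Qed.

Theorem theorem10 (kappa : R) (phi : R -> R) (delta : R) :
  0 < kappa < 1 ->
  let lam := sqrt (1 - kappa ^ 2) in
  let k := sqrt ((1 - lam) / (1 + lam)) in
  let U := fun p => RInt (fun th => hyp2F1 (1/4) (3/4) (1/2) (kappa ^ 2 * sin th ^ 2)) 0 p in
  0 < delta ->
  phi 0 = 0 ->
  continuous phi 0 ->
  (forall u, Rabs u < delta -> U (phi u) = u) ->
  exists eps, 0 < eps /\
    forall u, Rabs u < eps ->
      cos (phi u) ^ 2 =
        jcn k (/ sqrt (1 + k ^ 2) * u) ^ 2 * jdn k (/ sqrt (1 + k ^ 2) * u) ^ 2.
Proof.
  intros Hkap lam k U Hd _ _ HU.
  assert (Hlam2 : lam ^ 2 = 1 - kappa ^ 2) by (apply pow2_sqrt; nra).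
  assert (Hlam : 0 < lam < 1).
  { split. apply sqrt_lt_R0; nra.
    assert (0 <= lam) by apply sqrt_pos. nra. }
  assert (Hk2 : k ^ 2 = (1 - lam) / (1 + lam)).
  { apply pow2_sqrt. apply Rmult_le_pos; [lra | left; apply Rinv_0_lt_compat; lra]. }
  assert (Hk : 0 < k < 1).
  { assert (0 < k) by (apply sqrt_lt_R0; apply Rmult_lt_0_compat; [lra | apply Rinv_0_lt_compat; lra]).
    split; auto.
    assert (k ^ 2 < 1).
    { rewrite Hk2. apply Rmult_lt_reg_r with (1 + lam); [lra|].
      unfold Rdiv. rewrite Rmult_assoc, Rinv_l by lra. lra. }
    nra. }
  assert (HK : kappa * (1 + k ^ 2) = 2 * k).
  { apply Rsqr_inj. apply Rmult_le_pos; nra. lra.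
    unfold Rsqr.
    replace (kappa * (1 + k ^ 2) * (kappa * (1 + k ^ 2))) with (kappa ^ 2 * (1 + k^2) ^ 2) by ring.
    replace (2 * k * (2 * k)) with (4 * k ^ 2) by ring.
    replace (kappa ^ 2) with (1 - lam ^ 2) by lra.
    rewrite Hk2. field. lra. }
  clearbody k lam.
  assert (HUe : forall p, U p = RInt (Gk kappa) 0 p).
  { intros p. unfold U. apply RInt_ext. intros; apply hyp_G; auto. }
  assert (HGc : forall x, continuous (Gk kappa) x) by (intros; apply G_cont; auto).
  assert (HG1 : forall x, 1 <= Gk kappa x) by (intros; apply G_ge1; auto).
  assert (HEc : forall x, continuous (Ek k) x) by (intros; apply E_cont; auto).
  assert (HE1 : forall x, 1 <= Ek k x) by (intros; apply E_ge1; auto).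
  set (r := sqrt (1 + k ^ 2)).
  assert (Hr1 : 1 <= r).
  { unfold r. apply Rle_trans with (sqrt 1); [rewrite sqrt_1; lra | apply sqrt_le_1_alt; nra]. }
  exists (Rmin delta 1). split. apply Rmin_glb_lt; lra.
  intros u Hu.
  assert (Hud : Rabs u < delta) by (eapply Rlt_le_trans; [exact Hu | apply Rmin_l]).
  assert (Hu1 : Rabs u < 1) by (eapply Rlt_le_trans; [exact Hu | apply Rmin_r]).
  set (v := / r * u).
  assert (Hv : Rabs v <= Rabs u).
  { unfold v. rewrite Rabs_mult, Rabs_inv, (Rabs_pos_eq r) by lra.
    apply Rmult_le_reg_l with r; [lra|].
    rewrite <- Rmult_assoc, Rinv_r by lra. pose proof (Rabs_pos u). nra. }
  set (psi := jam k v).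
  assert (Hpsi : ellF k psi = v).
  { unfold psi, jam. apply epsilon_spec.
    destruct (Fsurj (Ek k) HEc HE1 v) as [p Hp]. exists p. exact Hp. }
  assert (Hpsi1 : Rabs psi <= Rabs v).
  { rewrite <- Hpsi. apply (Fbound (Ek k) HEc HE1). }
  assert (Hrange : forall x, Rmin 0 psi <= x <= Rmax 0 psi -> -1 < x < 1).
  { intros x Hx. pose proof (minmax_abs psi x Hx). assert (Rabs x < 1) by lra. apply Rabs_def2 in H0. lra. }
  assert (HUP : U (Pf k psi) = u).
  { rewrite HUe. rewrite <- P0 at 1.
    rewrite <- (RInt_comp (Gk kappa) (Pf k) (dPf k)).
    2: { intros; apply HGc. }
    2: { intros x Hx. split. apply P_der; auto. apply dP_cont; auto. }
    rewrite (RInt_ext _ (fun y => scal r (Ek k y))).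
    2: { intros x Hx. change (scal (dPf k x) (Gk kappa (Pf k x))) with (dPf k x * Gk kappa (Pf k x)).
         rewrite (key k Hk kappa HK). reflexivity. apply Hrange. split; apply Rlt_le; apply Hx. }
    rewrite (RInt_scal (V:=R_CompleteNormedModule)). 2: { apply (exR (Ek k) HEc). }
    change (RInt (Ek k) 0 psi) with (ellF k psi). rewrite Hpsi.
    change (r * v = u). unfold v. field. lra. }
  assert (Hphi : phi u = Pf k psi).
  { apply (Finj (Gk kappa) HGc HG1). rewrite <- !HUe. rewrite HUP. apply HU; auto. }
  rewrite Hphi. rewrite cosP; auto.
  2: { assert (Hq : Rabs psi < 1) by lra. apply Rabs_def2 in Hq. lra. }
  unfold jcn, jdn, jsn. fold v. fold psi.
  rewrite pow2_sqrt. reflexivity.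
  pose proof (B_facts k Hk psi). lra.
Qed.
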